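(* Let $\mathcal{G}=(\mathcal{V},\mathcal{A})$ be a finite directed graph with vertex weights $\{q_i\}_{i\in\mathcal{V}}$. Apply the following pruning procedure: for each leaf SCC of $\mathcal{G}$, with vertex set $\mathcal{V}_S$, select a vertex $i\in\arg\min_{a\in\mathcal{V}_S} q_a$ (arbitrarily among minimizers) and remove all outgoing arcs of $i$. Let $\mathcal{G}^{\mathrm{p}}=(\mathcal{V}^{\mathrm{p}},\mathcal{A}^{\mathrm{p}})$ be the resulting graph. Then $\mathcal{V}^{\mathrm{p}}=\mathcal{V}$, $\mathcal{A}^{\mathrm{p}}\subseteq\mathcal{A}$, and \[ \sum_{i:\ i \text{ is a predecessor of some vertex in } \mathcal{L}(\mathcal{G}^{\mathrm{p}})} q_i = \sum_{k\in\mathcal{V}} q_k - \sum_{i\in\mathcal{L}(\mathcal{G})} q_i - \sum_{\mathcal{V}_S\in\mathbb{V}} \min_{a\in\mathcal{V}_S} q_a, \] where $\mathbb{V}$ is the set of vertex sets of all leaf SCCs of $\mathcal{G}$.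
   Context: A leaf vertex is a vertex with no outgoing arcs; $\mathcal{L}(\mathcal{H})$ denotes the set of leaf vertices of a directed graph $\mathcal{H}$. A vertex $j$ is a predecessor of vertex $i$ iff there is a directed path from $j$ to $i$. A strongly connected component (SCC) is a maximal subgraph in which every ordered pair of vertices is joined by a directed path inside the subgraph. A leaf SCC is an SCC with at least two vertices from which no arc goes to a vertex outside the SCC. *)

(* Defs.v *)
From mathcomp Require Import all_boot all_order all_algebra.
Set Implicit Arguments. Unset Strict Implicit. Unset Printing Implicit Defensive.
Import Order.TTheory GRing.Theory Num.Theory.
Local Open Scope ring_scope.

(* A finite directed graph: vertex set = finType T, arc set = relation A
   (A i j  <=>  arc i -> j). *)
Section Graph.
Variable T : finType.
Variable A : rel T.

Definition leaf (i : T) : bool := [forall j, ~~ A i j].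

Definition predecessor (j i : T) : bool := [exists k, A j k && connect A k i].

Definition induced (S : {set T}) : rel T := [rel a b | [&& A a b, a \in S & b \in S]].

Definition strongly_connected (S : {set T}) : bool :=
  [forall x in S, forall y in S, connect (induced S) x y].

Definition scc (S : {set T}) : bool :=
  [&& S != set0, strongly_connected S &
      [forall S' : {set T}, (S \subset S') && strongly_connected S' ==> (S' == S)]].

Definition leaf_scc (S : {set T}) : bool :=
  [&& scc S, (1 < #|S|)%N & [forall x in S, forall y, A x y ==> (y \in S)]].

End Graph.

(* minimum of the weights q over a (nonempty) vertex set S; 0 on the empty set *)
Definition setmin (T : finType) (R : realDomainType) (q : T -> R) (S : {set T}) : R :=
  if [pick x in S] is Some x then \big[Order.min/q x]_(a in S) q a else 0.

Definition selected (T : finType) (A : rel T) (sel : {set T} -> T) : {set T} :=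
  [set sel S | S in [set S : {set T} | leaf_scc A S]].

Definition pruned (T : finType) (A : rel T) (sel : {set T} -> T) : rel T :=
  [rel x y | A x y && (x \notin selected A sel)].

(* Main.v *)
Require Import Defs.
From mathcomp Require Import all_boot all_order all_algebra.
Import Order.TTheory GRing.Theory Num.Theory.
Local Open Scope ring_scope.

Set Implicit Arguments. Unset Strict Implicit.
Section Helpers.
Variable T : finType.
Variable A : rel T.

Lemma induced_connect_A (S : {set T}) a b :
  connect (induced A S) a b -> connect A a b.
Proof.
apply: connect_sub => x y /= /andP[Axy _]; exact: connect1.
Qed.

Lemma induced_mono (S S' : {set T}) a b : S \subset S' ->
  connect (induced A S) a b -> connect (induced A S') a b.
Proof.
move=> sub; apply: connect_sub => x y /= /and3P[Axy xS yS]; apply: connect1.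
by apply/and3P; split; [exact: Axy|exact: (subsetP sub _ xS)|exact: (subsetP sub _ yS)].
Qed.

Lemma closed_induced (Y : {set T}) a b :
  (forall u v, u \in Y -> A u v -> v \in Y) -> a \in Y ->
  connect A a b -> connect (induced A Y) a b.
Proof.
move=> cl aY /connectP[p pth ->]; elim: p a aY pth => [|c p IH] a aY /=.
  by move=> _; exact: connect0.
case/andP=> Aac pth.
have cY := cl _ _ aY Aac.
apply: connect_trans (IH _ cY pth); apply: connect1; by apply/and3P.
Qed.

Lemma scc_eq (S1 S2 : {set T}) x : scc A S1 -> scc A S2 -> x \in S1 -> x \in S2 -> S1 = S2.
Proof.
move=> /and3P[_ sc1 mx1] /and3P[_ sc2 mx2] x1 x2.
have scU : strongly_connected A (S1 :|: S2).
  apply/forallP=> a; apply/implyP=> aU; apply/forallP=> b; apply/implyP=> bU.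
  have h1 : forall u v, u \in S1 -> v \in S1 -> connect (induced A (S1 :|: S2)) u v.
    move=> u v uS vS; apply: (induced_mono (subsetUl S1 S2)).
    by move/forallP: sc1 => /(_ u) /implyP /(_ uS) /forallP /(_ v) /implyP /(_ vS).
  have h2 : forall u v, u \in S2 -> v \in S2 -> connect (induced A (S1 :|: S2)) u v.
    move=> u v uS vS; apply: (induced_mono (subsetUr S1 S2)).
    by move/forallP: sc2 => /(_ u) /implyP /(_ uS) /forallP /(_ v) /implyP /(_ vS).
  move: aU bU; rewrite !inE => /orP[aS|aS] /orP[bS|bS].
  - exact: h1.
  - exact: connect_trans (h1 _ _ aS x1) (h2 _ _ x2 bS).
  - exact: connect_trans (h2 _ _ aS x2) (h1 _ _ x1 bS).
  - exact: h2.
have e1 : S1 :|: S2 = S1.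
  apply/eqP; move/forallP: mx1 => /(_ (S1 :|: S2)) /implyP; apply.
  by rewrite subsetUl scU.
have e2 : S1 :|: S2 = S2.
  apply/eqP; move/forallP: mx2 => /(_ (S1 :|: S2)) /implyP; apply.
  by rewrite subsetUr scU.
by rewrite -e1 e2.
Qed.

Definition reach x := [set z | connect A x z].

Lemma sink_exists (noloop : forall i, ~~ A i i) x :
  exists t, connect A x t && (leaf A t || [exists S, leaf_scc A S && (t \in S)]).
Proof.
move: {2}#|reach x| (leqnn #|reach x|) => n; elim: n x => [|n IH] x.
  by rewrite leqn0 => /eqP/cards0_eq/setP/(_ x); rewrite !inE connect0.
move=> hn.
case: (boolP [exists z, connect A x z && ~~ connect A z x]).
  case/existsP=> z /andP[xz nzx].
  have sub : reach z \proper reach x.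
    apply/properP; split.
      by apply/subsetP=> w; rewrite !inE => /(connect_trans xz).
    by exists x; rewrite !inE ?connect0 ?(negbTE nzx).
  have [t /andP[zt ht]] := IH z (leq_trans (proper_card sub) hn) .
  - by exists t; rewrite (connect_trans xz zt) ht.
move=> nex.
have back : forall z, connect A x z -> connect A z x.
  move=> z xz; apply/negPn/negP=> nzx; move/negP: nex; apply; apply/existsP.
  by exists z; rewrite xz nzx.
case: (boolP (leaf A x)) => lx.
  by exists x; rewrite connect0 lx.
have cl : forall u v, u \in reach x -> A u v -> v \in reach x.
  by move=> u v; rewrite !inE => xu Auv; apply: connect_trans xu (connect1 Auv).
have xY : x \in reach x by rewrite inE connect0.
have sc : strongly_connected A (reach x).
  apply/forallP=> a; apply/implyP=> aY; apply/forallP=> b; apply/implyP=> bY.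
  apply: closed_induced => //; move: aY bY; rewrite !inE => xa xb.
  exact: connect_trans (back _ xa) xb.
have ls : leaf_scc A (reach x).
  apply/and3P; split.
  - apply/and3P; split => //.
      by apply/set0Pn; exists x.
    apply/forallP=> S'; apply/implyP=> /andP[sub sc'].
    rewrite eqEsubset; apply/andP; split => //.
    apply/subsetP=> w wS'; rewrite inE.
    have xS' := subsetP sub _ xY.
    move/forallP: sc' => /(_ x) /implyP /(_ xS') /forallP /(_ w) /implyP /(_ wS').
    exact: induced_connect_A.
  - move: lx; rewrite /leaf negb_forall => /existsP[y]; rewrite negbK => Axy.
    have yx : y != x by apply: contraTneq Axy => ->; exact: noloop.
    rewrite (cardD1 x) xY add1n ltnS; apply/card_gt0P; exists y.
    by rewrite !inE yx connect1.
  - apply/forallP=> u; apply/implyP=> uY; apply/forallP=> v; apply/implyP.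
    exact: cl.
by exists x; rewrite connect0 /=; apply/orP; right; apply/existsP; exists (reach x); rewrite ls xY.
Qed.

Lemma trunc (P : pred T) (e : rel T) x t :
  (forall u v, A u v -> ~~ P u -> e u v) -> connect A x t -> P t ->
  exists l, P l && connect e x l.
Proof.
move=> hAe /connectP[p pth ->] Pt; elim: p x pth Pt => [|c p IH] x /=.
  by move=> _ Px; exists x; rewrite Px connect0.
case/andP=> Axc pth Pl.
case: (boolP (P x)) => Px; first by exists x; rewrite Px connect0.
have [l /andP[Pl' cl]] := IH c pth Pl.
by exists l; rewrite Pl' (connect_trans (connect1 (hAe _ _ Axc Px)) cl).
Qed.

End Helpers.

Theorem lemma7 (T : finType) (R : realDomainType) (A : rel T) (q : T -> R)
    (sel : {set T} -> T)
    (noloop : forall i : T, ~~ A i i)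
    (hsel : forall S : {set T}, leaf_scc A S ->
        sel S \in S /\ (forall a, a \in S -> q (sel S) <= q a)) :
  subrel (pruned A sel) A /\
  \sum_(i | [exists l, leaf (pruned A sel) l && predecessor (pruned A sel) i l]) q i
  = \sum_(k : T) q k - \sum_(i | leaf A i) q i
      - \sum_(S : {set T} | leaf_scc A S) setmin q S.
Proof.
have subr : subrel (pruned A sel) A by move=> x y /andP[].
split => //.
set Sel := selected A sel.
have selI : forall S, leaf_scc A S -> sel S \in Sel.
  by move=> S lS; apply: imset_f; rewrite inE.
have Sel_inv : forall s, s \in Sel -> exists2 S, leaf_scc A S & s = sel S.
  by move=> s /imsetP[S]; rewrite inE => lS ->; exists S.
have nleafsel : forall s, s \in Sel -> ~~ leaf A s.
  move=> s /Sel_inv[S lS ->]; have [sS _] := hsel S lS.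
  move: (lS) => /and3P[/and3P[_ sc _] c2 _].
  have [y yS ys] : exists2 y, y \in S & y != sel S.
    move: c2; rewrite (cardD1 (sel S)) sS add1n ltnS => /card_gt0P[y].
    by rewrite !inE => /andP[ys yS]; exists y.
  move/forallP: sc => /(_ (sel S)) /implyP /(_ sS) /forallP /(_ y) /implyP /(_ yS).
  case/connectP=> [[|c p]] /=; first by move=> _ e; rewrite e eqxx in ys.
  case/andP=> /and3P[Asc _ _] _ _.
  by rewrite /leaf negb_forall; apply/existsP; exists c; rewrite negbK.
have leafP : forall l, leaf A l || (l \in Sel) -> leaf (pruned A sel) l.
  move=> l /orP[ll|lS]; apply/forallP=> y; rewrite /pruned /=.
    by move/forallP: ll => /(_ y) /negbTE ->.
  by rewrite lS andbF.
have predP : forall i, [exists l, leaf (pruned A sel) l && predecessor (pruned A sel) i l]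
    = ~~ leaf A i && (i \notin Sel).
  move=> i; apply/idP/idP.
    case/existsP=> l /andP[_ /existsP[k /andP[/andP[Aik iS] _]]].
    rewrite iS andbT /leaf negb_forall; apply/existsP; exists k; by rewrite negbK.
  case/andP; rewrite /leaf negb_forall => /existsP[k]; rewrite negbK => Aik iS.
  have [t /andP[kt ht]] := sink_exists noloop k.
  have [t' [kt' Pt']] : exists t', connect A k t' /\ (leaf A t' || (t' \in Sel)).
    case/orP: ht => [lt|/existsP[S /andP[lS tS]]]; first by exists t; rewrite kt lt.
    exists (sel S); split; last by rewrite selI ?orbT.
    have [sS _] := hsel S lS.
    move: lS => /and3P[/and3P[_ sc _] _ _].
    apply: connect_trans kt _; apply: (@induced_connect_A _ _ S).
    by move/forallP: sc => /(_ t) /implyP /(_ tS) /forallP /(_ (sel S)) /implyP /(_ sS).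
  have hAe : forall u v, A u v -> ~~ (leaf A u || (u \in Sel)) -> pruned A sel u v.
    by move=> u v Auv nP; rewrite /pruned /= Auv; move: nP; rewrite negb_or => /andP[].
  have [l /andP[Pl kl]] := trunc (P := fun z => leaf A z || (z \in Sel)) hAe kt' Pt'.
  apply/existsP; exists l; apply/andP; split; first exact: leafP.
  apply/existsP; exists k; rewrite kl andbT; apply/andP; split => //.
have eqsum : \sum_(S : {set T} | leaf_scc A S) setmin q S = \sum_(i in Sel) q i.
  rewrite big_imset /=.
    apply: eq_big => S; first by rewrite inE.
    move=> lS; have [sS hm] := hsel S lS; rewrite /setmin.
    case: pickP => [x0 x0S|]; last by move/(_ (sel S)); rewrite sS.
    apply/eqP; rewrite eq_le; apply/andP; split.
      exact: bigmin_le_cond.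
    by apply: le_bigmin => [|i iS]; apply: hm.
  move=> S1 S2; rewrite !inE => l1 l2 e.
  have [s1 _] := hsel S1 l1; have [s2 _] := hsel S2 l2.
  move: l1 l2 => /and3P[sc1 _ _] /and3P[sc2 _ _].
  by apply: (scc_eq sc1 sc2 s1); rewrite e.
rewrite eqsum.
set Pr := fun i => [exists l, leaf (pruned A sel) l && predecessor (pruned A sel) i l].
have h1 : \sum_(k : T) q k = \sum_(i | Pr i) q i + \sum_(i | ~~ Pr i) q i.
  by rewrite (bigID Pr predT).
have h2 : \sum_(i | ~~ Pr i) q i = \sum_(i | leaf A i) q i + \sum_(i in Sel) q i.
  rewrite (bigID (leaf A)) /=; congr (_ + _); apply: eq_bigl => i;
    rewrite /Pr predP negb_and !negbK;
    case lS: (leaf A i); case iS: (i \in Sel) => //=.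
  by move: (nleafsel _ iS); rewrite lS.
rewrite h1 h2 /Pr.
set a := \sum_(i | _) q i; set b := \sum_(i | leaf A i) q i; set c := \sum_(i in Sel) q i.
by rewrite addrA (addrAC a b c) addrK addrK.
Qed.
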